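(* Let $X$ be a finite $T_0$ topological space, $\mathcal V$ a multivector field on $X$, and $\gamma$ an essential solution in $X$. Then there exist an essential solution $\rho$ in $\alpha(\gamma)$ with $\operatorname{im}\rho=\alpha(\gamma)$ and an essential solution $\rho'$ in $\omega(\gamma)$ with $\operatorname{im}\rho'=\omega(\gamma)$.
   Context: Notation: $\operatorname{cl}$ is closure; $A\subset X$ is locally closed if $\operatorname{cl}A\setminus A$ is closed. A multivector field $\mathcal V$ on $X$ is a partition of $X$ into locally closed sets (multivectors); $[x]_{\mathcal V}$ is the multivector containing $x$. A multivector $V$ is critical if $H(\operatorname{cl}V,\operatorname{cl}V\setminus V)$ (relative singular homology) is nontrivial, regular otherwise. $A$ is $\mathcal V$-compatible if it is a union of multivectors; $\langle A\rangle_{\mathcal V}$ is the smallest locally closed $\mathcal V$-compatible set containing $A$. $\Pi_{\mathcal V}(x)=\operatorname{cl}\{x\}\cup[x]_{\mathcal V}$. A solution is a partial map $\gamma:\mathbb Z\nrightarrow X$ with domain an integer interval and $\gamma(t+1)\in\Pi_{\mathcal V}(\gamma(t))$; a full solution has domain $\mathbb Z$. $\alpha(\gamma)=\langle\bigcap_{t\le0}\gamma((-\infty,t])\rangle_{\mathcal V}$, $\omega(\gamma)=\langle\bigcap_{t\ge0}\gamma([t,\infty))\rangle_{\mathcal V}$. A full solution is essential unless $\alpha(\gamma)$ or $\omega(\gamma)$ is contained in a single regular multivector; an essential solution in $A$ is an essential full solution with image in $A$. *)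

(* Defs.v *)
From HB Require Import structures.
From mathcomp Require Import all_boot all_order all_algebra.
From mathcomp Require Import all_classical all_reals.
From mathcomp Require Import topology.
From mathcomp Require Import Rstruct Rstruct_topology.
Set Implicit Arguments. Unset Strict Implicit. Unset Printing Implicit Defensive.
Import Order.TTheory GRing.Theory Num.Theory.
Local Open Scope classical_set_scope.
Local Open Scope ring_scope.

Notation RR := Rdefinitions.R.

Definition std_simplex (n : nat) : set 'rV[RR]_(n.+1) :=
  [set x | (forall i, 0 <= x ord0 i) /\ \sum_i x ord0 i = 1].
Arguments std_simplex n : clear implicits.

Definition face (m : nat) (i : 'I_(m.+2)) (x : 'rV[RR]_(m.+1)) : 'rV[RR]_(m.+2) :=
  \row_j (if unlift i j is Some k then x ord0 k else 0).

Section SingularHomology.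
Variable X : topologicalType.

(* a (candidate) singular n-simplex: only its values on Δ^n matter *)
Definition simplex (n : nat) := 'rV[RR]_(n.+1) -> X.

Definition sing_simplex (n : nat) (A : set X) (s : simplex n) : Prop :=
  {within (std_simplex n), continuous s} /\ s @` (std_simplex n) `<=` A.

Definition sim_eq (n : nat) (s t : simplex n) : Prop :=
  forall x, std_simplex n x -> s x = t x.

(* singular n-chains as formal finite sums  sum_k a_k s_k *)
Definition chain (n : nat) := seq (int * simplex n).

Definition chain_in (n : nat) (A : set X) (c : chain n) : Prop :=
  forall p, List.In p c -> sing_simplex A p.2.

Definition coef (n : nat) (c : chain n) (t : simplex n) : int :=
  \sum_(p <- c) (if `[< sim_eq p.2 t >] then p.1 else 0).

Definition boundary (m : nat) (c : chain m.+1) : chain m :=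
  flatten [seq [seq (((-1) ^+ i * p.1)%R, p.2 \o face i) | i : 'I_(m.+2) <- enum 'I_(m.+2)]
          | p <- c].

Definition rel_cycle (A B : set X) (n : nat) : chain n -> Prop :=
  match n with
  | 0 => fun c => chain_in A c
  | m.+1 => fun c => chain_in A c /\
      forall t : simplex m, ~ sing_simplex B t -> coef (boundary c) t = 0
  end.

Definition rel_boundary (A B : set X) (n : nat) (c : chain n) : Prop :=
  exists d : chain n.+1, chain_in A d /\
    forall t : simplex n, ~ sing_simplex B t -> coef c t = coef (boundary d) t.

(* H(A, B) is nontrivial: H_n(A, B; Z) <> 0 for some n *)
Definition homology_nontrivial (A B : set X) : Prop :=
  exists n (c : chain n), rel_cycle A B c /\ ~ rel_boundary A B c.

Definition locally_closed (A : set X) : Prop := closed (closure A `\` A).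

Definition multivector_field (V : set (set X)) : Prop :=
  [/\ forall W, V W -> W !=set0 /\ locally_closed W,
      forall x, exists2 W, V W & W x
    & forall W W', V W -> V W' -> W `&` W' !=set0 -> W = W'].

Definition mv_of (V : set (set X)) (x : X) : set X :=
  \bigcup_(W in [set W | V W /\ W x]) W.

Definition critical (W : set X) : Prop :=
  homology_nontrivial (closure W) (closure W `\` W).
Definition regular (W : set X) : Prop := ~ critical W.

Definition compatible (V : set (set X)) (A : set X) : Prop :=
  forall x, A x -> mv_of V x `<=` A.

Definition lcc_hull (V : set (set X)) (A : set X) : set X :=
  \bigcap_(B in [set B | locally_closed B /\ compatible V B /\ A `<=` B]) B.

Definition Pi (V : set (set X)) (x : X) : set X :=
  closure [set x] `|` mv_of V x.

Definition full_solution (V : set (set X)) (g : int -> X) : Prop :=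
  forall t, Pi V (g t) (g (t + 1)).

Definition alpha_lim (V : set (set X)) (g : int -> X) : set X :=
  lcc_hull V (\bigcap_(t in [set t : int | t <= 0]) [set g s | s in [set s | s <= t]]).

Definition omega_lim (V : set (set X)) (g : int -> X) : set X :=
  lcc_hull V (\bigcap_(t in [set t : int | 0 <= t]) [set g s | s in [set s | t <= s]]).

Definition essential (V : set (set X)) (g : int -> X) : Prop :=
  [/\ full_solution V g,
      ~ (exists2 W, V W /\ regular W & alpha_lim V g `<=` W)
    & ~ (exists2 W, V W /\ regular W & omega_lim V g `<=` W)].

Definition essential_in (V : set (set X)) (A : set X) (g : int -> X) : Prop :=
  essential V g /\ (forall t, A (g t)).

End SingularHomology.

(* Main.v *)
Require Import Defs.
From mathcomp Require Import all_boot all_order all_algebra.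
From mathcomp Require Import all_classical all_reals.
From mathcomp Require Import topology.
From mathcomp Require Import zify.
Local Open Scope classical_set_scope.

Module Helpers.
Set Implicit Arguments. Unset Strict Implicit. Unset Printing Implicit Defensive.
Import Order.TTheory GRing.Theory Num.Theory.
Local Open Scope classical_set_scope.

Lemma enum_X (X : topologicalType) : finite_set [set: X] -> exists s : seq X, forall x, x \in s.
Proof.
move=> /finite_fsetP [F HF]; exists (finmap.enum_fset F) => x.
have : [set: X] x by [].
by rewrite HF.
Qed.

Lemma closure_point (X : topologicalType) (Xfin : finite_set [set: X]) (S : set X) z :
  closure S z -> exists2 s, S s & closure [set s] z.
Proof.
move=> Hz; apply: contrapT => Hn.
have H1 : forall s, S s -> exists B, nbhs z B /\ ~ B s.
  move=> s Ss; apply: contrapT => Hc; apply: Hn; exists s => // B NB.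
  exists s; split => //; apply: contrapT => Bs; apply: Hc; by exists B.
have [e He] := enum_X Xfin.
suff : forall l : seq X, exists B, nbhs z B /\ forall x, x \in l -> S x -> ~ B x.
  move=> /(_ e) [B [NB HB]]; have [x [Sx Bx]] := Hz B NB.
  exact: (HB x (He x) Sx Bx).
elim => [|x l [B [NB HB]]].
  by exists setT; split => //; exact: filterT.
case: (pselect (S x)) => Sx.
  have [B' [NB' HB']] := H1 x Sx.
  exists (B `&` B'); split; first exact: filterI.
  move=> y; rewrite in_cons => /orP [/eqP -> _ [] _ //|yl Sy [By _]].
  exact: (HB y yl Sy By).
exists B; split => // y; rewrite in_cons => /orP [/eqP -> //|yl Sy By].
exact: (HB y yl Sy By).
Qed.

Definition convex (X : topologicalType) (B : set X) :=
  forall z w v, B z -> B v -> closure [set v] w -> closure [set w] z -> B w.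

Lemma lc_convex (X : topologicalType) (B : set X) : locally_closed B -> convex B.
Proof.
move=> Hlc z w v Bz Bv Hw Hz; apply: contrapT => nBw.
have Cw : (closure B `\` B) w.
  split => //; apply: (closureS _ Hw) => _ ->; exact: Bv.
have : (closure B `\` B) z.
  apply: Hlc; apply: (closureS _ Hz) => _ ->; exact: Cw.
by case.
Qed.

Lemma convex_lc (X : topologicalType) (Xfin : finite_set [set: X]) (B : set X) :
  convex B -> locally_closed B.
Proof.
move=> Hc z Hz.
have Hz' : closure B z.
  have : closure (closure B) z by apply: (closureS _ Hz) => y [].
  by have E := proj1 (closure_id (closure B)) (@closed_closure _ B); rewrite -E.
split => // Bz.
have [w [Cw nBw] Hzw] := closure_point Xfin Hz.
have [v Bv Hwv] := closure_point Xfin Cw.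
exact: nBw (Hc z w v Bz Bv Hwv Hzw).
Qed.

Lemma mv_self (X : topologicalType) (V : set (set X)) (HV : multivector_field V) x :
  mv_of V x x.
Proof. case: HV => _ H _; have [W VW Wx] := H x; by exists W. Qed.

Lemma mv_sym (X : topologicalType) (V : set (set X)) x y :
  mv_of V x y -> mv_of V y x.
Proof. move=> [W [VW Wx] Wy]; by exists W. Qed.

Lemma Pi_refl (X : topologicalType) (V : set (set X)) x : Pi V x x.
Proof. left; exact: subset_closure. Qed.

Definition fam (X : topologicalType) (V : set (set X)) (A B : set X) :=
  locally_closed B /\ compatible V B /\ A `<=` B.

Lemma hull_sub (X : topologicalType) (V : set (set X)) A : A `<=` lcc_hull V A.
Proof. by move=> x Ax B [_ [_ HB]]; apply: HB. Qed.

Lemma hull_min (X : topologicalType) (V : set (set X)) A B :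
  fam V A B -> lcc_hull V A `<=` B.
Proof. by move=> HB x Hx; apply: Hx. Qed.

Lemma hull_compat (X : topologicalType) (V : set (set X)) A :
  compatible V (lcc_hull V A).
Proof.
move=> x Hx y Hy B HB; have [_ [Hc _]] := HB.
exact: (Hc x (Hx B HB) y Hy).
Qed.

Lemma hull_convex (X : topologicalType) (V : set (set X)) A : convex (lcc_hull V A).
Proof.
move=> z w v Hz Hv Hw Hzw B HB; have [Hlc _] := HB.
exact: (lc_convex Hlc (Hz B HB) (Hv B HB) Hw Hzw).
Qed.

Lemma hull_id (X : topologicalType) (V : set (set X)) B :
  locally_closed B -> compatible V B -> lcc_hull V B = B.
Proof.
move=> Hlc Hc; apply/seteqP; split; last exact: hull_sub.
by apply: hull_min; split => //; split.
Qed.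

Inductive walk (X : topologicalType) (V : set (set X)) (S : set X) : X -> seq X -> X -> Prop :=
| wnil x : walk V S x [::] x
| wcons x z l y : Pi V x z -> S z -> walk V S z l y -> walk V S x (z :: l) y.

Lemma walk_cat (X : topologicalType) (V : set (set X)) S x l y l' z :
  walk V S x l y -> walk V S y l' z -> walk V S x (l ++ l') z.
Proof. elim => //= x0 z0 l0 y0 H1 H2 _ IH H; apply: wcons => //; exact: IH. Qed.

Lemma walk_in (X : topologicalType) (V : set (set X)) S x l y :
  walk V S x l y -> forall z, z \in l -> S z.
Proof.
elim => // x0 z0 l0 y0 _ Sz _ IH z; rewrite in_cons => /orP [/eqP -> //|]; exact: IH.
Qed.

Lemma walk_mono (X : topologicalType) (V : set (set X)) S S' x l y :
  S `<=` S' -> walk V S x l y -> walk V S' x l y.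
Proof. move=> HS; elim => [x0|x0 z0 l0 y0 H1 H2 _ IH]; [exact: wnil| apply: wcons => //; exact: HS]. Qed.

Lemma walk_last (X : topologicalType) (V : set (set X)) S x l y :
  walk V S x l y -> last x l = y.
Proof. by elim. Qed.

Lemma walk_step (X : topologicalType) (V : set (set X)) S x l y d :
  walk V S x l y -> forall i, i.+1 < size l -> Pi V (nth d l i) (nth d l i.+1).
Proof.
elim => // x0 z0 l0 y0 H1 _ Hw IH [|i] /=.
  by case: Hw H1 IH => //= x1 z1 l1 y1 H _ _ _ _.
by move=> Hi; apply: IH.
Qed.

Lemma walk_head (X : topologicalType) (V : set (set X)) S x l y d :
  walk V S x l y -> l <> [::] -> Pi V x (nth d l 0).
Proof. by case. Qed.

Lemma core (X : topologicalType) (Xfin : finite_set [set: X]) (V : set (set X))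
  (HV : multivector_field V) (A0 : set X) a0 :
  A0 a0 -> (forall a b, A0 a -> A0 b -> exists l, walk V A0 a l b) ->
  exists l, walk V (lcc_hull V A0) a0 l a0 /\ l <> [::] /\
     forall x, lcc_hull V A0 x -> x \in l.
Proof.
move=> Aa0 Hreach.
set L := lcc_hull V A0.
have AL : A0 `<=` L by exact: hull_sub.
set C := [set x | L x /\ (exists l, walk V L a0 l x) /\ (exists l, walk V L x l a0)].
have CL : C `<=` L by move=> x [].
have Cconv : convex C.
  move=> z w v [Lz [_ [l1 H1]]] [Lv [[l2 H2] _]] Hw Hz.
  have Lw : L w := hull_convex Lz Lv Hw Hz.
  split => //; split.
    exists (l2 ++ [:: w]); apply: (walk_cat H2); apply: wcons => //; last exact: wnil.
    by left.
  exists (z :: l1); apply: wcons => //; by left.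
have Ccomp : compatible V C.
  move=> x [Lx [[l1 H1] [l2 H2]]] y Hy.
  have Ly : L y := hull_compat Lx Hy.
  split => //; split.
    exists (l1 ++ [:: y]); apply: (walk_cat H1); apply: wcons => //; last exact: wnil.
    by right.
  exists (x :: l2); apply: wcons => //; right; exact: mv_sym.
have AC : A0 `<=` C.
  move=> a Aa; split; first exact: AL.
  have [l1 H1] := Hreach a0 a Aa0 Aa.
  have [l2 H2] := Hreach a a0 Aa Aa0.
  by split; [exists l1|exists l2]; apply: walk_mono H1 || apply: walk_mono H2.
have LC : L `<=` C.
  apply: hull_min; split; first exact: convex_lc.
  by split.
have [e He] := enum_X Xfin.
suff : forall s : seq X, exists l, walk V L a0 l a0 /\ l <> [::] /\
     forall x, x \in s -> L x -> x \in l.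
  move=> /(_ e) [l [H1 [H2 H3]]]; exists l; split => //; split => // x Lx.
  exact: H3.
elim => [|x s [l [H1 [H2 H3]]]].
  exists [:: a0]; split; last by split.
  apply: wcons; [exact: Pi_refl|exact: AL|exact: wnil].
case: (pselect (L x)) => Lx; last first.
  exists l; split => //; split => // y; rewrite in_cons => /orP [/eqP -> //|]; exact: H3.
have [_ [[l1 W1] [l2 W2]]] := LC x Lx.
exists (l ++ (l1 ++ l2)); split.
  apply: (walk_cat H1); exact: walk_cat W1 W2.
split; first by case: (l) H2.
move=> y; rewrite in_cons => /orP [/eqP -> _|ys Ly]; last by rewrite mem_cat H3.
case: l1 W1 => [|z l1] W1.
  inversion W1; subst.
  rewrite mem_cat; apply/orP; left.
  have := walk_last H1; case: (l) H2 => // u l' _ /= <-; exact: mem_last.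
rewrite !mem_cat; apply/orP; right; apply/orP; left.
have := walk_last W1 => /= <-; exact: mem_last.
Qed.

Local Open Scope ring_scope.

Definition per (X : Type) (a0 : X) (l : seq X) (t : int) : X :=
  nth a0 l `|(t %% (size l)%:Z)%Z|%N.

Lemma per_idx (X : Type) (a0 : X) (l : seq X) (i : nat) (k : int) :
  (i < size l)%N -> per a0 l (i%:Z + k * (size l)%:Z) = nth a0 l i.
Proof.
move=> Hi; rewrite /per.
have -> : ((i%:Z + k * (size l)%:Z) %% (size l)%:Z)%Z = i%:Z.
  rewrite addrC modzMDl modz_small //; apply/andP; split => //.
by [].
Qed.

Lemma per_step (X : topologicalType) (V : set (set X)) S a0 l :
  walk V S a0 l a0 -> l <> [::] -> full_solution V (per a0 l).
Proof.
move=> Hw Hne t.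
have n0 : (0 < size l)%N by case: (l) Hne.
set n := size l.
have j0 : 0 <= (t %% n%:Z)%Z by apply: modz_ge0; lia.
have j1 : (t %% n%:Z)%Z < n%:Z.
  have := @ltz_mod t n%:Z; rewrite /=; move=> H; apply: H; lia.
rewrite /per -/n.
have E : ((t + 1) %% n%:Z)%Z = (((t %% n%:Z)%Z + 1) %% n%:Z)%Z by rewrite modzDml.
rewrite E.
set j := (t %% n%:Z)%Z in j0 j1 E *.
have Hj : j = (absz j)%:Z by lia.
case: (ltP (j + 1) n%:Z) => Hlt.
  rewrite modz_small; last by apply/andP; split; lia.
  have -> : absz (j + 1) = (absz j).+1 by lia.
  apply: (@walk_step _ V S a0 l a0 a0 Hw); rewrite -/n; lia.
have -> : j + 1 = n%:Z by lia.
rewrite modzz /=.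
have -> : absz j = n.-1 by lia.
rewrite nth_last (walk_last Hw).
exact: (walk_head _ Hw Hne).
Qed.

Lemma generic (X : topologicalType) (Xfin : finite_set [set: X]) (V : set (set X))
  (HV : multivector_field V) (A0 : set X) a0 :
  A0 a0 -> (forall a b, A0 a -> A0 b -> exists l, walk V A0 a l b) ->
  ~ (exists2 W, V W /\ regular W & lcc_hull V A0 `<=` W) ->
  exists rho, essential_in V (lcc_hull V A0) rho /\ range rho = lcc_hull V A0.
Proof.
move=> Aa0 Hr Hess.
have [l [Hw [Hne Hall]]] := core Xfin HV Aa0 Hr.
set L := lcc_hull V A0 in Hw Hall Hess *.
have n0 : (0 < size l)%N by case: (l) Hne.
have Hin : forall t, (per a0 l t) \in l.
  move=> t; rewrite /per; apply: mem_nth.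
  have := @ltz_mod t (size l)%:Z; have := @modz_ge0 t (size l)%:Z.
  move=> H1 H2; have H3 : (size l)%:Z != 0 by lia.
  have {}H1 := H1 H3; have {}H2 := H2 H3; rewrite ger0_norm // in H2. by rewrite -ltz_nat gez0_abs.
have HL : forall t, L (per a0 l t) by move=> t; exact: (walk_in Hw (Hin t)).
have Hidx : forall x, L x -> forall k : int,
    per a0 l ((index x l)%:Z + k * (size l)%:Z) = x.
  move=> x Lx k; rewrite per_idx; [apply: nth_index; exact: Hall|rewrite index_mem; exact: Hall].
have Lid : lcc_hull V L = L.
  apply: hull_id; [apply: (convex_lc Xfin); exact: hull_convex|exact: hull_compat].
have Hi : forall x, L x -> ((index x l) < size l)%N by move=> x Lx; rewrite index_mem; exact: Hall.
have Ealpha : \bigcap_(t in [set t : int | t <= 0]) [set per a0 l s | s in [set s | s <= t]] = L.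
  apply/seteqP; split.
    move=> x Hx; have [s _ <-] := Hx 0 (lexx _); exact: HL.
  move=> x Lx t /= Ht; exists ((index x l)%:Z + (t - 1) * (size l)%:Z); last exact: Hidx.
  have := Hi x Lx; rewrite /=; nia.
have Eomega : \bigcap_(t in [set t : int | 0 <= t]) [set per a0 l s | s in [set s | t <= s]] = L.
  apply/seteqP; split.
    move=> x Hx; have [s _ <-] := Hx 0 (lexx _); exact: HL.
  move=> x Lx t /= Ht; exists ((index x l)%:Z + t * (size l)%:Z); last exact: Hidx.
  have := Hi x Lx; rewrite /=; nia.
exists (per a0 l); split; last first.
  apply/seteqP; split; first by move=> _ [t _ <-].
  move=> x Lx; exists ((index x l)%:Z + 0 * (size l)%:Z) => //; exact: Hidx.
split => //; split; first exact: per_step Hw Hne.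
  by rewrite /alpha_lim Ealpha Lid.
by rewrite /omega_lim Eomega Lid.
Qed.

Lemma sol_walk (X : topologicalType) (V : set (set X)) (g : int -> X) (S : set X) :
  full_solution V g -> forall (k : nat) s, (forall u, s < u -> u <= s + k%:Z -> S (g u)) ->
  exists l, walk V S (g s) l (g (s + k%:Z)).
Proof.
move=> Hg; elim => [|k IH] s HS.
  by exists [::]; rewrite addr0; exact: wnil.
have [l Hl] := IH s (fun u h1 h2 => HS u h1 ltac:(lia)).
exists (l ++ [:: g (s + k.+1%:Z)]); apply: (walk_cat Hl); apply: wcons; last exact: wnil.
  have -> : s + k.+1%:Z = s + k%:Z + 1 by lia.
  exact: Hg.
apply: HS; lia.
Qed.

Lemma tail_omega (X : topologicalType) (Xfin : finite_set [set: X]) (g : int -> X) :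
  exists T : int, 0 <= T /\ forall t, T <= t ->
    (\bigcap_(t in [set t : int | 0 <= t]) [set g s | s in [set s | t <= s]]) (g t).
Proof.
set R := \bigcap_(t in _) _.
have [e He] := enum_X Xfin.
suff : forall s : seq X, exists T : int, 0 <= T /\ forall x, x \in s -> forall t, T <= t -> g t = x -> R x.
  move=> /(_ e) [T [T0 HT]]; exists T; split => // t Ht; exact: HT (He _) t Ht erefl.
elim => [|x s [T [T0 HT]]]; first by exists 0; split.
case: (pselect (R x)) => Rx.
  exists T; split => // y; rewrite in_cons => /orP [/eqP -> //|]; exact: HT.
have [t0 [t00 Ht0]] : exists t0 : int, 0 <= t0 /\ forall u, t0 <= u -> g u <> x.
  apply: contrapT => Hn; apply: Rx => t0 /= Ht0.
  apply: contrapT => Hn2; apply: Hn; exists t0; split => // u Hu Hgu; apply: Hn2.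
  by exists u.
exists (T + t0); split; first lia.
move=> y; rewrite in_cons => /orP [/eqP -> t Ht Hgt|ys t Ht]; last by apply: HT => //; lia.
by exfalso; apply: (Ht0 t) => //; lia.
Qed.

Lemma tail_alpha (X : topologicalType) (Xfin : finite_set [set: X]) (g : int -> X) :
  exists T : int, T <= 0 /\ forall t, t <= T ->
    (\bigcap_(t in [set t : int | t <= 0]) [set g s | s in [set s | s <= t]]) (g t).
Proof.
set R := \bigcap_(t in _) _.
have [e He] := enum_X Xfin.
suff : forall s : seq X, exists T : int, T <= 0 /\ forall x, x \in s -> forall t, t <= T -> g t = x -> R x.
  move=> /(_ e) [T [T0 HT]]; exists T; split => // t Ht; exact: HT (He _) t Ht erefl.
elim => [|x s [T [T0 HT]]]; first by exists 0; split.
case: (pselect (R x)) => Rx.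
  exists T; split => // y; rewrite in_cons => /orP [/eqP -> //|]; exact: HT.
have [t0 [t00 Ht0]] : exists t0 : int, t0 <= 0 /\ forall u, u <= t0 -> g u <> x.
  apply: contrapT => Hn; apply: Rx => t0 /= Ht0.
  apply: contrapT => Hn2; apply: Hn; exists t0; split => // u Hu Hgu; apply: Hn2.
  by exists u.
exists (T + t0); split; first lia.
move=> y; rewrite in_cons => /orP [/eqP -> t Ht Hgt|ys t Ht]; last by apply: HT => //; lia.
by exfalso; apply: (Ht0 t) => //; lia.
Qed.

Lemma sol_walk2 (X : topologicalType) (V : set (set X)) (g : int -> X) (S : set X) s s' :
  full_solution V g -> s <= s' -> (forall u, s < u -> u <= s' -> S (g u)) ->
  exists l, walk V S (g s) l (g s').
Proof.
move=> Hg Hs HS.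
have E : s' = s + (absz (s' - s))%:Z by lia.
rewrite E; apply: sol_walk => // u H1 H2; apply: HS; lia.
Qed.

End Helpers.
Import Helpers.

Theorem proposition3p10 (X : topologicalType)
  (Xfin : finite_set [set: X]) (XT0 : @kolmogorov_space X)
  (V : set (set X)) (HV : multivector_field V)
  (gamma : int -> X) (Hg : essential_in V [set: X] gamma) :
  (exists rho : int -> X,
      essential_in V (alpha_lim V gamma) rho /\ range rho = alpha_lim V gamma) /\
  (exists rho' : int -> X,
      essential_in V (omega_lim V gamma) rho' /\ range rho' = omega_lim V gamma).
Proof.
case: Hg => [[Hsol Ha Ho] _].
split.
  have [T [T0 HT]] := tail_alpha Xfin gamma.
  apply: (generic Xfin HV (a0 := gamma T) (HT T (Order.POrderTheory.lexx _))) => // a b Ra Rb.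
  have [s' Hs' <-] := Rb T T0.
  have [s Hs <-] := Ra s' (Order.POrderTheory.le_trans Hs' T0).
  apply: sol_walk2 => // u H1 H2; apply: HT; exact: (Order.POrderTheory.le_trans H2 Hs').
have [T [T0 HT]] := tail_omega Xfin gamma.
apply: (generic Xfin HV (a0 := gamma T) (HT T (Order.POrderTheory.lexx _))) => // a b Ra Rb.
have [s Hs <-] := Ra T T0.
have [s' Hs' <-] := Rb s (Order.POrderTheory.le_trans T0 Hs).
apply: sol_walk2 => // u H1 H2; apply: HT.
exact: (Order.POrderTheory.le_trans Hs (Order.POrderTheory.ltW H1)).
Qed.
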